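(* Let $(\pi_1,\pi_2)$ be a chainable pair of patterns, $\pi_i=(a_i,b_i,c_i,d_i)$, and let $\mathcal{P}=\mathcal{P}(\mathbf{S}_{\pi_1},\mathbf{S}_{\pi_2})$. Then for each $P\in\mathcal{P}$: (1) $R_P=\operatorname{supp}(\mathbf{S}_{\pi_1}[:,i])$ and $C_P=\operatorname{supp}(\mathbf{S}_{\pi_2}[i,:])$ for every $i\in P$; (2) the sets $R_P\times C_P$, $P\in\mathcal{P}$, are pairwise disjoint; (3) $|P|=r(\pi_1,\pi_2)$, $|R_P|=b_1$ and $|C_P|=c_2$; (4) $\operatorname{supp}(\mathbf{S}_{\pi_1*\pi_2})=\operatorname{supp}(\mathbf{S}_{\pi_1}\mathbf{S}_{\pi_2})=\bigcup_{P\in\mathcal{P}}R_P\times C_P$.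
   Context: A pattern is a tuple $\pi=(a,b,c,d)$ of positive integers and $\mathbf{S}_\pi:=\mathbf{I}_a\otimes\mathbf{1}_{b\times c}\otimes\mathbf{I}_d\in\{0,1\}^{abd\times acd}$. Patterns $\pi_1,\pi_2$ are chainable if $a_1c_1/a_2=b_2d_2/d_1=:r(\pi_1,\pi_2)$ is an integer, $a_1\mid a_2$ and $d_2\mid d_1$; then $\pi_1*\pi_2:=(a_1,b_1d_1/d_2,a_2c_2/a_1,d_2)$. For binary matrices $\mathbf{L}\in\{0,1\}^{m\times r},\mathbf{R}\in\{0,1\}^{r\times n}$, let $\mathbf{U}_i:=\mathbf{L}[:,i]\mathbf{R}[i,:]\in\{0,1\}^{m\times n}$; the relation $i\sim j\iff\mathbf{U}_i=\mathbf{U}_j$ partitions $\{1,\dots,r\}$ into classes, the set of which is $\mathcal{P}(\mathbf{L},\mathbf{R})$; for a class $P$, $R_P\subseteq\{1,\dots,m\}$ and $C_P\subseteq\{1,\dots,n\}$ are such that the common support of $\mathbf{U}_i$, $i\in P$, equals $R_P\times C_P$. $\operatorname{supp}$ denotes the set of indices of nonzero entries. *)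

(* Defs.v *)
(* Kronecker product: [tensmx] from mathcomp-real-closed
   (standard convention: index (i,j) of 'I_m * 'I_n  |->  i * n + j). *)
From mathcomp Require Import all_boot all_algebra.
From mathcomp Require Import mxtens.

Set Implicit Arguments.
Unset Strict Implicit.
Unset Printing Implicit Defensive.

Import GRing.Theory.
Local Open Scope ring_scope.

(* S_pi := I_a (x) 1_{b x c} (x) I_d, an (a b d) x (a c d) binary matrix,
   with entries in int (so that products S_{pi1} S_{pi2} are the usual ones). *)
Definition Spat (a b c d : nat) : 'M[int]_(a * b * d, a * c * d) :=
  ((1%:M : 'M[int]_a) *t (const_mx 1 : 'M[int]_(b, c))) *t (1%:M : 'M[int]_d).

Definition chainable (a1 b1 c1 d1 a2 b2 c2 d2 : nat) : Prop :=
  [/\ (a2 %| a1 * c1)%N, (d1 %| b2 * d2)%N,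
      (a1 * c1 %/ a2 = b2 * d2 %/ d1)%N, (a1 %| a2)%N & (d2 %| d1)%N].

Definition rchain (a1 c1 a2 : nat) : nat := (a1 * c1 %/ a2)%N.

Lemma chain_inner a1 b1 c1 d1 a2 b2 c2 d2 :
  chainable a1 b1 c1 d1 a2 b2 c2 d2 -> (a2 * b2 * d2 = a1 * c1 * d1)%N.
Proof.
case=> h1 h2 h3 _ _.
rewrite -mulnA -(divnK h2) -h3 -{2}(divnK h1).
by rewrite mulnA [(a2 * _)%N]mulnC.
Qed.

Lemma chain_rows a1 b1 c1 d1 a2 b2 c2 d2 :
  chainable a1 b1 c1 d1 a2 b2 c2 d2 ->
  (a1 * (b1 * d1 %/ d2) * d2 = a1 * b1 * d1)%N.
Proof.
case=> _ _ _ _ h; rewrite -mulnA divnK ?mulnA //.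
exact: dvdn_mull.
Qed.

Lemma chain_cols a1 b1 c1 d1 a2 b2 c2 d2 :
  chainable a1 b1 c1 d1 a2 b2 c2 d2 ->
  (a1 * (a2 * c2 %/ a1) * d2 = a2 * c2 * d2)%N.
Proof.
case=> _ _ _ h _; rewrite [(a1 * _)%N]mulnC divnK //.
exact: dvdn_mulr.
Qed.

Section Classes.
Variables (m r n : nat).

Definition suppM (p q : nat) (M : 'M[int]_(p, q)) : {set 'I_p * 'I_q} :=
  [set ij | M ij.1 ij.2 != 0].
Definition suppcol (M : 'M[int]_(m, r)) (i : 'I_r) : {set 'I_m} :=
  [set k | M k i != 0].
Definition supprow (M : 'M[int]_(r, n)) (i : 'I_r) : {set 'I_n} :=
  [set k | M i k != 0].

Definition Umx (L : 'M[int]_(m, r)) (R : 'M[int]_(r, n)) (i : 'I_r)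
  : 'M[int]_(m, n) := col i L *m row i R.

Definition classes (L : 'M[int]_(m, r)) (R : 'M[int]_(r, n))
  : {set {set 'I_r}} :=
  [set [set j | Umx L R j == Umx L R i] | i : 'I_r].

(* (R_P, C_P): sets such that supp U_i = R_P x C_P for all i in P
   (chosen by [pick]; when no such pair exists we default to (set0,set0)). *)
Definition RCpair (L : 'M[int]_(m, r)) (R : 'M[int]_(r, n)) (P : {set 'I_r})
  : {set 'I_m} * {set 'I_n} :=
  odflt (set0, set0)
    [pick RC : {set 'I_m} * {set 'I_n}
       | [forall i in P, suppM (Umx L R i) == setX RC.1 RC.2]].

Definition RP L R P := (RCpair L R P).1.
Definition CP L R P := (RCpair L R P).2.

End Classes.

(* Main.v *)
Require Import Defs.
From mathcomp Require Import all_boot all_algebra.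
From mathcomp Require Import mxtens.
Set Implicit Arguments. Unset Strict Implicit. Unset Printing Implicit Defensive.
Import GRing.Theory Num.Theory.

Lemma mk_lt a b d q be s : q < a -> be < b -> s < d -> (q*b+be)*d+s < a*b*d.
Proof.
move=> hq hb hs.
have h1 : q*b+be < a*b.
  apply: (@leq_trans (q*b+b)); first by rewrite ltn_add2l.
  by rewrite addnC -mulSn leq_mul2r hq orbT.
apply: (@leq_trans ((q*b+be)*d+d)); first by rewrite ltn_add2l.
by rewrite addnC -mulSn leq_mul2r h1 orbT.
Qed.

Lemma mk_divd b d q be s : s < d -> ((q*b+be)*d+s) %/ d = q*b+be.
Proof. by move=> hs; rewrite divnMDl ?(leq_ltn_trans _ hs) // divn_small // addn0. Qed.

Lemma mk_modd b d q be s : s < d -> ((q*b+be)*d+s) %% d = s.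
Proof. by move=> hs; rewrite modnMDl modn_small. Qed.

Lemma mk_divb b q be : be < b -> (q*b+be) %/ b = q.
Proof. by move=> hs; rewrite divnMDl ?(leq_ltn_trans _ hs) // divn_small // addn0. Qed.

Lemma mk_modb b q be : be < b -> (q*b+be) %% b = be.
Proof. by move=> hs; rewrite modnMDl modn_small. Qed.

Lemma q_lt M a b d (x : 'I_M) : M = a*b*d -> 0 < b -> 0 < d -> x %/ d %/ b < a.
Proof.
move=> eM hb hd; rewrite !ltn_divLR // -eM; exact: ltn_ord.
Qed.

Lemma count_blk M a b d q s (eM : M = a*b*d) (hb : 0 < b) (hd : 0 < d)
  (hq : q < a) (hs : s < d) :
  #|[set x : 'I_M | (x %/ d %/ b, x %% d) == (q, s)]| = b.
Proof.
subst M.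
pose F (be : 'I_b) : 'I_(a*b*d) := Ordinal (mk_lt hq (ltn_ord be) hs).
have -> : [set x : 'I_(a*b*d) | (x %/ d %/ b, x %% d) == (q, s)] = F @: setT.
  apply/setP => x; rewrite inE; apply/eqP/imsetP.
    case=> e1 e2; exists (Ordinal (ltn_pmod (x %/ d) hb)) => //.
    apply: val_inj => /=.
    by rewrite -e1 -e2 -divn_eq -divn_eq.
  case=> be _ -> /=.
  by rewrite mk_divd // mk_divb // mk_modd.
rewrite card_imset ?cardsT ?card_ord //.
move=> u v /(congr1 val) /= e.
apply/val_inj; have := congr1 (fun z => z %/ d %% b) e.
by rewrite /= !mk_divd // !mk_modb.
Qed.

Lemma SpatE a b c d (x : 'I_(a*b*d)) (y : 'I_(a*c*d)) :
  Spat a b c d x y = ((x %/ d %/ b, x %% d)%N == (y %/ d %/ c, y %% d)%N)%:R%R.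
Proof.
rewrite /Spat !mxE /= mulr1 xpair_eqE -!val_eqE /=.
by case: eqP; case: eqP.
Qed.

Local Open Scope ring_scope.
Section Gen.
Variables (m r n : nat) (T T' : eqType) (f : 'I_m -> T) (g : 'I_r -> T)
  (g' : 'I_r -> T') (h : 'I_n -> T').
Variables (L : 'M[int]_(m,r)) (R : 'M[int]_(r,n)).
Hypothesis hL : forall x k, L x k = (f x == g k)%:R.
Hypothesis hR : forall k y, R k y = (g' k == h y)%:R.
Hypothesis hLne : forall k, exists x, f x = g k.
Hypothesis hRne : forall k, exists y, g' k = h y.

Lemma b01 (b : bool) : ((b%:R : int) != 0) = b.
Proof. by case: b. Qed.

Lemma suppcolE k : suppcol L k = [set x | f x == g k].
Proof. by apply/setP => x; rewrite !inE hL b01. Qed.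

Lemma supprowE k : supprow R k = [set y | g' k == h y].
Proof. by apply/setP => y; rewrite !inE hR b01. Qed.

Lemma UmxE i x y : Umx L R i x y = L x i * R i y.
Proof. by rewrite /Umx !mxE big_ord1 !mxE. Qed.

Lemma suppU i : suppM (Umx L R i) = setX (suppcol L i) (supprow R i).
Proof. by apply/setP=> [[x y]]; rewrite !inE /= UmxE mulf_eq0 negb_or. Qed.

Lemma Umx_eq i j : (Umx L R i == Umx L R j) = (g i == g j) && (g' i == g' j).
Proof.
apply/eqP/andP.
  move=> e; have [x hx] := hLne i; have [y hy] := hRne i.
  have := congr1 (fun M : 'M_(m, n) => M x y) e; rewrite !UmxE !hL !hR hx hy !eqxx.
  rewrite [h y == _]eq_sym.
  by case: (g i == g j); case: (g' j == h y).
by case=> /eqP e1 /eqP e2; apply/matrixP=> x y; rewrite !UmxE !hL !hR e1 e2.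
Qed.

Lemma setX_inj (A A' : {set 'I_m}) (B B' : {set 'I_n}) :
  A != set0 -> B != set0 -> setX A B = setX A' B' -> A = A' /\ B = B'.
Proof.
case/set0Pn=> a Ha; case/set0Pn=> b Hb e.
have: (a, b) \in setX A' B' by rewrite -e inE /= Ha Hb.
rewrite inE /= => /andP [Ha' Hb'].
split; apply/setP => z.
  apply/idP/idP => hz.
    have: (z, b) \in setX A' B' by rewrite -e inE /= hz Hb.
    by rewrite inE => /andP [].
  have: (z, b) \in setX A B by rewrite e inE /= hz Hb'.
  by rewrite inE => /andP [].
apply/idP/idP => hz.
  have: (a, z) \in setX A' B' by rewrite -e inE /= hz Ha.
  by rewrite inE => /andP [].
have: (a, z) \in setX A B by rewrite e inE /= hz Ha'.
by rewrite inE => /andP [].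
Qed.

Lemma colne k : suppcol L k != set0.
Proof. by have [x hx] := hLne k; apply/set0Pn; exists x; rewrite suppcolE inE hx. Qed.
Lemma rowne k : supprow R k != set0.
Proof. by have [x hx] := hRne k; apply/set0Pn; exists x; rewrite supprowE inE hx. Qed.

Lemma classP P : P \in classes L R -> forall i, i \in P ->
  P = [set j | (g j == g i) && (g' j == g' i)].
Proof.
case/imsetP=> i0 _ -> i; rewrite inE => /eqP e.
by apply/setP=> j; rewrite !inE -Umx_eq e.
Qed.

Lemma G1 P : P \in classes L R -> forall i, i \in P ->
  RP L R P = suppcol L i /\ CP L R P = supprow R i.
Proof.
move=> hP i hi; have eP := classP hP hi.
rewrite /RP /CP /RCpair.
case: pickP => [[A B] /= /forall_inP hf | hn].
  have := hf i hi; rewrite suppU => /eqP e.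
  by have [-> ->] := setX_inj (colne i) (rowne i) e.
have := hn (suppcol L i, supprow R i); rewrite /=.
move/negbT/negP; case; apply/forall_inP => j; rewrite eP inE => hj.
rewrite !suppU !suppcolE !supprowE; case/andP: hj => /eqP -> /eqP ->; done.
Qed.

Lemma mem_class P : P \in classes L R -> exists2 i, i \in P & P = [set j | (g j == g i) && (g' j == g' i)].
Proof.
move=> hP; case/imsetP: (hP) => i _ e; exists i; first by rewrite e inE.
by apply: classP => //; rewrite e inE.
Qed.

Lemma G2 P Q : P \in classes L R -> Q \in classes L R -> P != Q ->
  [disjoint setX (RP L R P) (CP L R P) & setX (RP L R Q) (CP L R Q)].
Proof.
move=> hP hQ; have [i hi eP] := mem_class hP; have [j hj eQ] := mem_class hQ.
have [-> ->] := G1 hP hi; have [-> ->] := G1 hQ hj.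
move=> nPQ; apply/pred0P => [[x y]] /=; apply/negP => /andP [].
rewrite !suppcolE !supprowE !inE /= => /andP [/eqP e1 /eqP e2] /andP [/eqP e3 /eqP e4].
by move/eqP: nPQ; apply; rewrite eP eQ -e1 e3 e2 e4.
Qed.

Lemma mulE x y : (L *m R) x y != 0 = [exists k, (f x == g k) && (g' k == h y)].
Proof.
rewrite !mxE psumr_neq0; last by move=> k _; rewrite hL hR -natrM ler0n.
apply/hasP/existsP => [[k _ /andP [_]] | [k hk]].
  by rewrite hL hR -natrM ltr0n muln_gt0 !lt0b => hk; exists k.
by exists k; rewrite ?mem_index_enum //= hL hR -natrM ltr0n muln_gt0 !lt0b.
Qed.

Lemma G4 : suppM (L *m R) = \bigcup_(P in classes L R) setX (RP L R P) (CP L R P).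
Proof.
apply/setP => [[x y]]; rewrite inE /= mulE; apply/existsP/bigcupP.
  case=> k hk.
  have hP : [set j | Umx L R j == Umx L R k] \in classes L R by apply/imsetP; exists k.
  exists [set j | Umx L R j == Umx L R k] => //.
  have hk2 : k \in [set j | Umx L R j == Umx L R k] by rewrite inE.
  have [->->] := G1 hP hk2.
  by rewrite inE /= suppcolE supprowE !inE.
case=> P hP; have [i hi _] := mem_class hP; have [->->] := G1 hP hi.
by rewrite inE /= suppcolE supprowE !inE => hk; exists i.
Qed.

End Gen.

Theorem lemma4p6 (a1 b1 c1 d1 a2 b2 c2 d2 : nat)
  (ha1 : (0 < a1)%N) (hb1 : (0 < b1)%N) (hc1 : (0 < c1)%N) (hd1 : (0 < d1)%N)
  (ha2 : (0 < a2)%N) (hb2 : (0 < b2)%N) (hc2 : (0 < c2)%N) (hd2 : (0 < d2)%N)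
  (H : chainable a1 b1 c1 d1 a2 b2 c2 d2) :
  let L := Spat a1 b1 c1 d1 in
  let R := castmx (chain_inner H, erefl) (Spat a2 b2 c2 d2) in
  let Pc := classes L R in
  (* pi1 * pi2 = (a1, b1 d1 / d2, a2 c2 / a1, d2) *)
  let S12 := castmx (chain_rows H, chain_cols H)
               (Spat a1 (b1 * d1 %/ d2) (a2 * c2 %/ a1) d2) in
  [/\ (forall P, P \in Pc -> forall i, i \in P ->
         RP L R P = suppcol L i /\ CP L R P = supprow R i),
      (forall P Q, P \in Pc -> Q \in Pc -> P != Q ->
         [disjoint setX (RP L R P) (CP L R P) & setX (RP L R Q) (CP L R Q)]),
      (forall P, P \in Pc ->
         [/\ #|P| = rchain a1 c1 a2, #|RP L R P| = b1 & #|CP L R P| = c2]),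
      suppM S12 = suppM (L *m R)
    & suppM (L *m R) = \bigcup_(P in Pc) setX (RP L R P) (CP L R P)].
Proof.
move=> L R Pc S12.
case: (H) => h1 h2 h3 h4 h5.
set t := (a2 %/ a1)%N; set r := (a1 * c1 %/ a2)%N.
have ea2 : a2 = (t * a1)%N by rewrite /t divnK.
have e1 : (a1 * c1 = r * a2)%N by rewrite /r divnK.
have ec1 : c1 = (r * t)%N.
  apply/eqP; rewrite -(eqn_pmul2l ha1) e1 {1}ea2; apply/eqP.
  by rewrite mulnA mulnC.
have hb2' : (b2 * d2 = r * d1)%N by rewrite /r h3 divnK.
have hr : (0 < r)%N.
  have : (0 < r * d1)%N by rewrite -hb2' muln_gt0 hb2 hd2.
  by rewrite muln_gt0 => /andP [].
have eM : (a1 * c1 * d1 = a2 * r * d1)%N by rewrite e1 [(r * a2)%N]mulnC.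
have K1 k : (k %/ d1 %/ c1 = k %/ d1 %/ r %/ t)%N by rewrite ec1 divnMA.
have K2 k : (k %/ d2 %/ b2 = k %/ d1 %/ r)%N
  by rewrite -divnMA mulnC hb2' mulnC divnMA.
have K3 k : (k %% d2 = k %% d1 %% d2)%N by rewrite modn_dvdm.
have K4 k : (k %/ d2 %/ (b1 * d1 %/ d2) = k %/ d1 %/ b1)%N.
  by rewrite -divnMA mulnC divnK ?dvdn_mull // mulnC divnMA.
have K5 k : (k %/ d2 %/ (a2 * c2 %/ a1) = k %/ d2 %/ c2 %/ t)%N.
  have -> : (a2 * c2 %/ a1 = c2 * t)%N.
    by rewrite {1}ea2 mulnAC mulnK // mulnC.
  by rewrite divnMA.
pose f1 (x : 'I_(a1 * b1 * d1)) := (x %/ d1 %/ b1, x %% d1)%N.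
pose g1 (k : 'I_(a1 * c1 * d1)) := (k %/ d1 %/ c1, k %% d1)%N.
pose g2 (k : 'I_(a1 * c1 * d1)) := (k %/ d2 %/ b2, k %% d2)%N.
pose hh2 (y : 'I_(a2 * c2 * d2)) := (y %/ d2 %/ c2, y %% d2)%N.
have hL x k : L x k = (f1 x == g1 k)%:R by exact: SpatE.
have hR k y : R k y = (g2 k == hh2 y)%:R by rewrite /R castmxE SpatE.
have eI : (a1 * c1 * d1 = a2 * b2 * d2)%N by rewrite (chain_inner H).
have hLne k : exists x, f1 x = g1 k.
  have hx := mk_lt (q_lt k (erefl _) hc1 hd1) hb1 (ltn_pmod k hd1).
  exists (Ordinal hx); rewrite /f1 /g1 /=.
  by rewrite mk_divd ?ltn_pmod // mk_divb // mk_modd ?ltn_pmod.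
have hRne k : exists y, g2 k = hh2 y.
  have hx := mk_lt (q_lt k eI hb2 hd2) hc2 (ltn_pmod k hd2).
  exists (Ordinal hx); rewrite /hh2 /g2 /=.
  by rewrite mk_divd ?ltn_pmod // mk_divb // mk_modd ?ltn_pmod.
split.
- exact: G1 hL hR hLne hRne.
- exact: G2 hL hR hLne hRne.
- move=> P hP; have [i hi eP] := mem_class hL hR hLne hRne hP.
  have [-> ->] := G1 hL hR hLne hRne hP hi.
  split.
  + have -> : P = [set j : 'I_(a1 * c1 * d1) | (j %/ d1 %/ r, j %% d1)%N == (i %/ d1 %/ r, i %% d1)%N].
      rewrite eP; apply/setP => j; rewrite !inE /g1 /g2 !K1 !K2 (K3 j) (K3 i).
      apply/idP/idP.
        by case/andP => /eqP [_ ee2] /eqP [ee1 _]; rewrite ee1 ee2.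
      by move/eqP => [ee1 ee2]; rewrite ee1 ee2 !eqxx.
    exact: count_blk eM hr hd1 (q_lt i eM hr hd1) (ltn_pmod i hd1).
  + rewrite (suppcolE hL).
    exact: count_blk (erefl _) hb1 hd1 (q_lt i (erefl _) hc1 hd1) (ltn_pmod i hd1).
  + rewrite (supprowE hR).
    have -> : [set y | g2 i == hh2 y] = [set y | hh2 y == g2 i]
      by apply/setP=> y; rewrite !inE eq_sym.
    exact: count_blk (erefl _) hc2 hd2 (q_lt i eI hb2 hd2) (ltn_pmod i hd2).
- apply/setP => [[x y]]; rewrite !inE /= (mulE hL hR).
  rewrite /S12 castmxE SpatE b01 /= K4 K5 (K3 x).
  apply/eqP/existsP.
    case=> ex ey.
    have kl : (((y %/ d2 %/ c2) * r + 0) * d1 + x %% d1 < a1 * c1 * d1)%N.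
      by rewrite eM; apply: mk_lt; rewrite ?ltn_pmod //; apply: (q_lt y (erefl _) hc2 hd2).
    exists (Ordinal kl); rewrite /f1 /g1 /g2 /hh2 /= K1 K2 (K3 (_ + _)%N).
    rewrite mk_divd ?ltn_pmod // mk_divb // mk_modd ?ltn_pmod //.
    by rewrite ex ey !eqxx.
  case=> k /andP [/eqP [ex1 ex2] /eqP [ek1 ek2]].
  by rewrite ex1 ex2 K1 -(K2 k) ek1 -(K3 k) ek2.
- exact: G4 hL hR hLne hRne.
Qed.
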